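(* Let $N>0$, $m>0$, $F>0$, $\alpha>0$ be fixed with $Nm>\alpha$, and for $g\geq 0$, $\tau\in(0,1)$, $L_g\geq 0$ define \[ L=\frac{N\left[(1-\tau)(mL_g+\alpha F)+(mg+F)mN\right]}{\alpha+(Nm-\alpha)\tau},\qquad q=\frac{(1-\tau)(L+L_g-\alpha g)}{\left(Nm+\alpha(1-\tau)\right)(L+L_g)}, \] regarded as functions of $(g,\tau,L_g)$. Then \[ \frac{\partial q}{\partial g}<0,\qquad \frac{\partial q}{\partial \tau}<0,\qquad \frac{\partial q}{\partial L_g}\geq 0 . \]
   Context: $L$ is equilibrium private employment and $q$ equilibrium per-capita consumption of each variety in a monopolistic-competition general equilibrium model with a measure $N$ of firms, marginal and fixed labor inputs $m$ and $F$, CARA utility parameter $\alpha$, income tax rate $\tau$, government purchase $g$ of each variety, and government employment $L_g$. Partial derivatives are taken in $(g,\tau,L_g)$ with other parameters fixed. *)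

(* Defs.v *)
From Stdlib Require Import Reals.
From Coquelicot Require Import Coquelicot.
Open Scope R_scope.

Definition Lemp (N m F alpha : R) (g tau Lg : R) : R :=
  N * ((1 - tau) * (m * Lg + alpha * F) + (m * g + F) * m * N)
  / (alpha + (N * m - alpha) * tau).

Definition qcons (N m F alpha : R) (g tau Lg : R) : R :=
  let L := Lemp N m F alpha g tau Lg in
  (1 - tau) * (L + Lg - alpha * g)
  / ((N * m + alpha * (1 - tau)) * (L + Lg)).

(* Main.v *)
Require Import Defs.
From Stdlib Require Import Reals Lra Psatz.
From Coquelicot Require Import Coquelicot.
Open Scope R_scope.

Theorem theorem2 (N m F alpha : R)
  (hN : 0 < N) (hm : 0 < m) (hF : 0 < F) (halpha : 0 < alpha)
  (hNm : alpha < N * m)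
  (g tau Lg : R) (hg : 0 <= g) (htau0 : 0 < tau) (htau1 : tau < 1)
  (hLg : 0 <= Lg) :
  (exists d, is_derive (fun x => qcons N m F alpha x tau Lg) g d /\ d < 0) /\
  (exists d, is_derive (fun x => qcons N m F alpha g x Lg) tau d /\ d < 0) /\
  (exists d, is_derive (fun x => qcons N m F alpha g tau x) Lg d /\ 0 <= d).
Proof.
  set (D := alpha + (N*m-alpha)*tau).
  set (A := (1-tau)*(m*Lg+alpha*F)+(m*g+F)*m*N).
  set (K := N*m+alpha*(1-tau)).
  set (P := N*A + Lg*D).
  assert (hD : 0 < D) by (unfold D; nra).
  assert (hDlt : D < N*m) by (unfold D; nra).
  assert (hK : 0 < K) by (unfold K; nra).
  assert (hmLg : 0 < m*Lg + alpha*F) by nra.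
  assert (hA0 : 0 < (m*g+F)*m*N) by (apply Rmult_lt_0_compat; [|lra]; apply Rmult_lt_0_compat; nra).
  assert (hA : 0 < A) by (unfold A; nra).
  assert (hP : 0 < P) by (unfold P; nra).
  assert (hPg : 0 < P - alpha*g*D).
  { unfold P, A.
    assert (alpha*g*D <= N*m*g*(N*m)).
    { assert (alpha*D <= N*m*(N*m)) by nra. nra. }
    assert (0 < N*(F*m*N)) by (apply Rmult_lt_0_compat; [lra|]; apply Rmult_lt_0_compat; nra).
    assert (0 < N*(1-tau)*(m*Lg+alpha*F)) by (apply Rmult_lt_0_compat; nra).
    assert (0 <= Lg*D) by nra.
    assert (E : N*((1-tau)*(m*Lg+alpha*F)+(m*g+F)*m*N) + Lg*D - alpha*g*D
       = N*(1-tau)*(m*Lg+alpha*F) + (N*m*g*(N*m) - alpha*g*D) + N*(F*m*N) + Lg*D) by ring.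
    rewrite E. lra. }
  assert (hDn : D <> 0) by lra.
  assert (hKn : K <> 0) by lra.
  assert (hPn : P <> 0) by lra.
  assert (hPD : N * A / D + Lg <> 0).
  { intro H. apply hPn. unfold P. apply (Rmult_eq_reg_r (/D)).
    - rewrite Rmult_0_l, <- H. field. exact hDn.
    - apply Rinv_neq_0_compat; exact hDn. }
  split; [|split].
  - exists (- ((1-tau)*alpha*D*(P - g*(N*N*m*m))) / (K*(P*P))).
    split.
    + unfold qcons, Lemp. auto_derive.
      * fold D A K. apply Rmult_integral_contrapositive_currified; assumption.
      * fold D A K. unfold P in *. field. repeat split; try assumption.
    + unfold Rdiv.
      assert (0 < / (K*(P*P))) by (apply Rinv_0_lt_compat; apply Rmult_lt_0_compat; nra).
      assert (0 < P - g*(N*N*m*m)).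
      { unfold P, A. assert (0 < N*(F*m*N)) by (apply Rmult_lt_0_compat; [lra|]; apply Rmult_lt_0_compat; nra).
        assert (0 < N*(1-tau)*(m*Lg+alpha*F)) by (apply Rmult_lt_0_compat; nra).
        assert (0 <= Lg*D) by nra.
        assert (E : N*((1-tau)*(m*Lg+alpha*F)+(m*g+F)*m*N) + Lg*D - g*(N*N*m*m)
           = N*(1-tau)*(m*Lg+alpha*F) + N*(F*m*N) + Lg*D) by ring.
        rewrite E. lra. }
      assert (0 < (1-tau)*alpha*D*(P - g*(N*N*m*m))).
      { repeat apply Rmult_lt_0_compat; lra. }
      nra.
  - set (B := (m*Lg+alpha*F)*D + A*(N*m-alpha)).
    assert (hB : 0 < B) by (unfold B; nra).
    exists (- (N*m*(P - alpha*g*D)) / (K*K*P) - ((1-tau)*alpha*g*N*B) / (K*(P*P))).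
    split.
    + unfold qcons, Lemp. auto_derive.
      * repeat split; try assumption. apply Rmult_integral_contrapositive_currified; [exact hKn | exact hPD].
      * fold D A K. unfold B, P, A, K in *. field; repeat split; assumption.
    + assert (0 < / (K*K*P)) by (apply Rinv_0_lt_compat; apply Rmult_lt_0_compat; nra).
      assert (0 < / (K*(P*P))) by (apply Rinv_0_lt_compat; apply Rmult_lt_0_compat; nra).
      assert (0 < N*m*(P - alpha*g*D)) by (apply Rmult_lt_0_compat; nra).
      assert (0 <= (1-tau)*alpha*g*N*B).
      { apply Rmult_le_pos; [|lra]. apply Rmult_le_pos; [|lra].
        apply Rmult_le_pos; [|lra]. nra. }
      unfold Rdiv. nra.
  - exists ((1-tau)*alpha*g*(N*m*(1-tau)+D)*D / (K*(P*P))).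
    split.
    + unfold qcons, Lemp. auto_derive.
      * fold D A K. apply Rmult_integral_contrapositive_currified; assumption.
      * fold D A K. unfold P in *. field. repeat split; assumption.
    + assert (0 < / (K*(P*P))) by (apply Rinv_0_lt_compat; apply Rmult_lt_0_compat; nra).
      assert (0 <= (1-tau)*alpha*g*(N*m*(1-tau)+D)*D).
      { apply Rmult_le_pos; [|lra]. apply Rmult_le_pos; [|nra].
        apply Rmult_le_pos; [|lra]. nra. }
      unfold Rdiv. nra.
Qed.
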